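(* Let $V$ be a reflexive Banach space, $F: V\to\mathbb{R}$ Fréchet differentiable and convex, $G\in\Gamma_0(V)$. For $1\le k\le N$ let $V_k$ be reflexive Banach spaces and $R_k^*: V_k\to V$ bounded linear operators with $V=\sum_{k=1}^N R_k^*V_k$ and surjective adjoints $R_k: V^*\to V_k^*$, and let $d_k, G_k: V_k\times V\to\overline{\mathbb{R}}$ be proper, convex and lower semicontinuous in their first argument. Let $\tau_0\in(0,1]$ and $\omega_0>0$ be given constants, $\tau\in(0,\tau_0]$, $\omega\ge\omega_0$, and $u^{(0)}\in\operatorname{dom}G$. Let $\{u^{(n)}\}$ be generated by the additive Schwarz method: for $n\ge0$, $$w_k^{(n+1)} \in \operatorname{argmin}_{w_k\in V_k}\big\{F(u^{(n)}) + \langle F'(u^{(n)}), R_k^* w_k\rangle + \omega d_k(w_k,u^{(n)}) + G_k(w_k,u^{(n)})\big\},\ 1\le k\le N,$$ $$u^{(n+1)} = u^{(n)} + \tau\sum_{k=1}^N R_k^* w_k^{(n+1)}.$$ Then for all $n\ge0$, $$u^{(n+1)} \in \operatorname{argmin}_{u\in V}\big\{F(u^{(n)}) + \langle F'(u^{(n)}), u-u^{(n)}\rangle + M_{\tau,\omega}(u,u^{(n)})\big\},$$ where $M_{\tau,\omega}(u,v) = \tau\inf\{\sum_{k=1}^N(\omega d_k+G_k)(w_k,v) : u-v = \tau\sum_{k=1}^N R_k^*w_k,\ w_k\in V_k\} + (1-\tau N)G(v)$.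
   Context: $\Gamma_0(V)$ is the set of proper, convex, lower semicontinuous functionals $V\to\mathbb{R}\cup\{+\infty\}$; $\operatorname{dom} G=\{u: G(u)<\infty\}$; $\overline{\mathbb{R}} = \mathbb{R}\cup\{\pm\infty\}$. *)

(* Defs.v *)
From HB Require Import structures.
From mathcomp Require Import all_boot all_order all_algebra.
From mathcomp Require Import all_classical all_reals all_analysis.
Set Implicit Arguments. Unset Strict Implicit. Unset Printing Implicit Defensive.
Import Order.TTheory GRing.Theory Num.Theory.
Import numFieldNormedType.Exports.
Local Open Scope classical_set_scope.
Local Open Scope ring_scope.

Definition is_dual_elt (R : realType) (V : normedModType R) (f : V -> R) :=
  linear f /\ continuous f.

(* The operator-norm bound
   is written without naming the norm: whenever |f x| <= M |x| for all x,
   then |phi f| <= C M. *)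
Definition reflexive_space (R : realType) (V : normedModType R) :=
  forall phi : (V -> R) -> R,
    (forall (f g : V -> R) (a : R), is_dual_elt f -> is_dual_elt g ->
       phi (fun x => a * f x + g x) = a * phi f + phi g) ->
    (exists C : R, forall f : V -> R, is_dual_elt f ->
       forall M : R, 0 <= M -> (forall x, `|f x| <= M * `|x|) ->
       `|phi f| <= C * M) ->
    exists x : V, forall f : V -> R, is_dual_elt f -> phi f = f x.

Definition convex_fun (R : realType) (V : normedModType R) (F : V -> R) :=
  forall (x y : V) (t : R), 0 <= t <= 1 ->
    F (t *: x + (1 - t) *: y) <= t * F x + (1 - t) * F y.

Local Open Scope ereal_scope.

(* Convexity of an extended-real-valued function (t strictly in (0,1)
   to avoid the indeterminate form 0 * (+oo)). *)
Definition econvex (R : realType) (V : normedModType R) (f : V -> \bar R) :=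
  forall (x y : V) (t : R), (0 < t < 1)%R ->
    f (t *: x + (1 - t) *: y)%R <= t%:E * f x + (1 - t)%:E * f y.

Definition eproper (R : realType) (V : normedModType R) (f : V -> \bar R) :=
  (forall x, f x != -oo) /\ (exists x, f x < +oo).

Definition Gamma0 (R : realType) (V : normedModType R) (f : V -> \bar R) :=
  [/\ eproper f, econvex f & lower_semicontinuous f].

Definition argmin (T : Type) (R : realType) (f : T -> \bar R) : set T :=
  [set x | forall y, f x <= f y].

Definition Mtw (R : realType) (V : normedModType R) (N : nat)
    (Vk : 'I_N -> normedModType R) (Rs : forall k : 'I_N, Vk k -> V)
    (d Gk : forall k : 'I_N, Vk k -> V -> \bar R) (G : V -> \bar R)
    (tau omega : R) (u v : V) : \bar R :=
  tau%:E * ereal_inf [set s | exists w : (forall k : 'I_N, Vk k),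
      (u - v = tau *: \sum_(k < N) Rs k (w k))%R /\
      s = \sum_(k < N) (omega%:E * d k (w k) v + Gk k (w k) v)]
  + (1 - tau * N%:R)%:E * G v.

(* Main.v *)
Require Import Defs.
From HB Require Import structures.
From mathcomp Require Import all_boot all_order all_algebra.
From mathcomp Require Import all_classical all_reals all_analysis.
Import Order.TTheory GRing.Theory Num.Theory.
Import numFieldNormedType.Exports.
Local Open Scope classical_set_scope.
Local Open Scope ring_scope.
Theorem lemma4p5 (R : realType) (V : completeNormedModType R)
  (F : V -> R) (G : V -> \bar R) (N : nat)
  (Vk : 'I_N -> completeNormedModType R)
  (Rs : forall k : 'I_N, Vk k -> V)
  (d Gk : forall k : 'I_N, Vk k -> V -> \bar R)
  (tau0 omega0 tau omega : R)
  (u : nat -> V) (w : nat -> forall k : 'I_N, Vk k) :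
  reflexive_space V ->
  (forall x, differentiable F x) -> convex_fun F ->
  Gamma0 G ->
  (forall k, reflexive_space (Vk k)) ->
  (forall k, linear (Rs k) /\ continuous (Rs k)) ->
  (forall v : V, exists wv : (forall k : 'I_N, Vk k), v = \sum_(k < N) Rs k (wv k)) ->
  (forall k (g : Vk k -> R), is_dual_elt g ->
     exists f : V -> R, is_dual_elt f /\ forall x, f (Rs k x) = g x) ->
  (forall k (v : V), Gamma0 (fun x => d k x v) /\ Gamma0 (fun x => Gk k x v)) ->
  0 < tau0 <= 1 -> 0 < omega0 ->
  0 < tau <= tau0 -> omega0 <= omega ->
  (G (u 0%N) < +oo)%E ->
  (forall n k, argmin (fun wk : Vk k =>
       ((F (u n))%:E + ('d F (u n) (Rs k wk))%:E
        + omega%:E * d k wk (u n) + Gk k wk (u n))%E) (w n.+1 k)) ->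
  (forall n, u n.+1 = u n + tau *: \sum_(k < N) Rs k (w n.+1 k)) ->
  forall n, argmin (fun v : V =>
       ((F (u n))%:E + ('d F (u n) (v - u n))%:E
        + Mtw Rs d Gk G tau omega v (u n))%E) (u n.+1).
Proof.
move=> _ _ _ _ _ _ _ _ _ _ _ /andP[tau_gt0 _] _ _ hw hu n v.
set L := u n.
set D := 'd F L.
set T := fun w' : (forall k : 'I_N, Vk k) =>
  (\sum_(k < N) (omega%:E * d k (w' k) L + Gk k (w' k) L))%E.
set J := fun w' : (forall k : 'I_N, Vk k) =>
  ((\sum_(k < N) D (Rs k (w' k)))%:E + T w')%E.
have Jmin : forall w', (J (w n.+1) <= J w')%E.
  move=> w'; rewrite /J /T -!sumEFin -!big_split /=.
  apply: lee_sum => k _.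
  have := hw n k (w' k); rewrite -!addeA leeD2lE //.
have Dlin : forall (a : R) (x y : V), D (a *: x + y) = a * D x + D y.
  by move=> a x y; rewrite linearD linearZ.
have DZ : forall (a : R) (x : V), D (a *: x) = a * D x.
  by move=> a x; have := Dlin a x 0; rewrite !addr0 linear0 addr0.
have Dsum : forall w' : (forall k : 'I_N, Vk k),
    D (\sum_(k < N) Rs k (w' k)) = \sum_(k < N) D (Rs k (w' k)).
  by move=> w'; rewrite linear_sum.
have tauN0 : tau != 0 by rewrite gt_eqF.
have taufin : (tau%:E : \bar R) \is a fin_num by [].
rewrite /Mtw !addeA; apply: leeD2r; rewrite -!addeA; apply: leeD2l.
apply: (@le_trans _ _ (tau%:E * J (w n.+1))%E).
- rewrite /J muleDr //.
  have -> : u n.+1 - L = tau *: \sum_(k < N) Rs k (w n.+1 k).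
    by rewrite hu /L addrC addKr.
  rewrite DZ Dsum EFinM; apply: leeD2l.
  rewrite lee_pmul2l // ?lte_fin //.
  by apply: ereal_inf_lbound; exists (w n.+1); split.
- set r := D (v - L) / tau.
  have -> : (D (v - L))%:E = (tau%:E * r%:E)%E.
    by rewrite -EFinM /r mulrC divfK.
  rewrite -muleDr //.
  rewrite lee_pmul2l // ?lte_fin //.
  rewrite addeC -leeBlDr //.
  apply: le_ereal_inf_tmp => _ [w' [hv ->]].
  rewrite leeBlDr //.
  apply: (le_trans (Jmin w')).
  rewrite /J addeC; apply: leeD2l.
  have -> : r = D (\sum_(k < N) Rs k (w' k)).
    by rewrite /r hv DZ (mulrC tau) mulfK.
  by rewrite Dsum.
Qed.
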